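(* Let $K\subseteq L$ be convex bodies in $\mathbb{R}^d$ with the origin in the interior of $K$. Let $F$ be an $s$-dimensional linear subspace, $(v_1,p_1),\dots,(v_m,p_m)$ contact pairs of $K$ and $L$, and $\alpha_1,\dots,\alpha_m$ positive weights with \[ P_F\Big(\sum_i\alpha_ip_i\otimes v_i\Big)P_F=P_F,\quad\sum_i\alpha_ip_i=0,\quad \operatorname{tr}\Big(\sum_i\alpha_ip_i\otimes v_i\Big)=\sum_i\alpha_i=d. \] Assume additionally that $P_FK\subset L\cap F$. Then there exist a point $z$ in the relative interior of $L\cap F$, contact pairs $(v_1',p_1'),\dots,(v_m',p_m')$ of $K-z$ and $L-z$, and weights $c_1,\dots,c_m>0$ such that \[ \sum_i c_ip_i'\otimes v_i'=\sum_i\alpha_ip_i\otimes v_i\quad\text{and}\quad \sum_ic_iP_Fv_i'=\sum_ic_ip_i'=0. \]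
   Context: A convex body is a compact convex set with nonempty interior. $P_F$ is orthogonal projection onto $F$. The polar of $S$ is $S^\circ=\{p:\langle x,p\rangle\le1\ \forall x\in S\}$. For convex bodies $K\subseteq L$, a contact pair of $K$ and $L$ is a pair $(v,p)$ with $v\in\partial K\cap\partial L$, $p\in\partial K^\circ\cap\partial L^\circ$, $\langle p,v\rangle=1$. For vectors $p,v$, $p\otimes v$ is the operator $x\mapsto\langle v,x\rangle p$. *)

(* Defs.v *)
(* Vectors of R^d are row
   vectors 'rV[R]_d; operators act on the right: x |-> x *m A. *)
From HB Require Import structures.
From mathcomp Require Import all_boot all_order all_algebra.
From mathcomp Require Import all_classical all_reals all_analysis.
Import numFieldNormedType.Exports.
Set Implicit Arguments. Unset Strict Implicit. Unset Printing Implicit Defensive.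
Import Order.TTheory GRing.Theory Num.Theory.
Local Open Scope classical_set_scope.
Local Open Scope ring_scope.

Section Defs.
Variables (R : realType) (d : nat).
Notation V := 'rV[R]_d.

Definition dot (x y : V) : R := \sum_(i < d) x 0 i * y 0 i.

Definition convexS (S : set V) : Prop :=
  forall x y (t : R), S x -> S y -> 0 <= t -> t <= 1 -> S ((1 - t) *: x + t *: y).

Definition convex_body (S : set V) : Prop :=
  compact S /\ convexS S /\ (interior S !=set0).

Definition bdry (S : set V) : set V := closure S `\` interior S.

Definition polar (S : set V) : set V := [set p | forall x, S x -> dot x p <= 1].

Definition contact_pair (K L : set V) (v p : V) : Prop :=
  bdry K v /\ bdry L v /\ bdry (polar K) p /\ bdry (polar L) p /\ dot p v = 1.

(* p (x) v : x |-> <v,x> p ; as a matrix acting on row vectors on the right *)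
Definition tens (p v : V) : 'M[R]_d := v^T *m p.

(* linear subspace spanned by the rows of F, as a set *)
Definition subsp (F : 'M[R]_d) : set V := [set x | (x <= F)%MS].

(* orthogonal projection onto the row space of F (as a right-acting matrix) *)
Definition projmx (F : 'M[R]_d) : 'M[R]_d :=
  let B := row_base F in B^T *m invmx (B *m B^T) *m B.

Definition translate (S : set V) (z : V) : set V := [set x - z | x in S].

Definition aff (S : set V) : set V :=
  [set x | exists (n : nat) (xs : 'I_n -> V) (l : 'I_n -> R),
     (forall i, S (xs i)) /\ \sum_(i < n) l i = 1 /\ x = \sum_(i < n) l i *: xs i].

Definition relint (S : set V) : set V :=
  [set z : V | S z /\ \forall y \near z, aff S y -> S y].

End Defs.

(* Main.v *)
Require Import Defs.
From HB Require Import structures.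
From mathcomp Require Import all_boot all_order all_algebra.
From mathcomp Require Import all_classical all_reals all_analysis.
Import Order.TTheory GRing.Theory Num.Theory.
Import numFieldNormedType.Exports.
Local Open Scope classical_set_scope.
Local Open Scope ring_scope.

Section Helpers.
Variables (R : realType) (d : nat).
Notation V := 'rV[R]_d.

Lemma dotC (x y : V) : dot x y = dot y x.
Proof. by rewrite /dot; apply: eq_bigr => i _; rewrite mulrC. Qed.

Lemma dotE (x y : V) : dot x y = (x *m y^T) 0 0.
Proof. by rewrite /dot !mxE; apply: eq_bigr => i _; rewrite !mxE. Qed.

Lemma dot_lin (a : R) (x y z : V) : dot (a *: x + y) z = a * dot x z + dot y z.
Proof. by rewrite !dotE mulmxDl -scalemxAl !mxE. Qed.

Lemma dotBl (x y z : V) : dot (x - y) z = dot x z - dot y z.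
Proof. by rewrite !dotE mulmxBl !mxE. Qed.

Lemma dotZl (a : R) (x z : V) : dot (a *: x) z = a * dot x z.
Proof. by rewrite !dotE -scalemxAl !mxE. Qed.

Lemma dot_suml n (a : 'I_n -> R) (x : 'I_n -> V) (z : V) :
  dot (\sum_i a i *: x i) z = \sum_i a i * dot (x i) z.
Proof.
rewrite dotE mulmx_suml summxE; apply: eq_bigr => i _.
by rewrite -scalemxAl mxE dotE.
Qed.

Lemma dot_sumr n (a : 'I_n -> R) (x : 'I_n -> V) (z : V) :
  dot z (\sum_i a i *: x i) = \sum_i a i * dot z (x i).
Proof.
rewrite dotC dot_suml; apply: eq_bigr => i _; by rewrite dotC.
Qed.

Lemma dot_cont (y : V) : continuous (fun q : V => dot q y).
Proof.
rewrite /dot.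
have h := @continuous_big R 'I_d +%R 0 predT (@add_continuous R) V (index_enum 'I_d) (fun i (q : V) => q 0 i * y 0 i).
have : (forall i, predT i -> continuous (fun q : V => q 0 i * y 0 i)).
  move=> i _ q; exact: (@cvgMr_tmp _ _ (nbhs q) _ (fun q : V => q 0 i) _ _ (@coord_continuous R 1 d 0 i q)).
move/h; apply.
Qed.

Lemma dot_row_mul (z p w : V) : z *m (p^T *m w) = dot z p *: w.
Proof.
by rewrite mulmxA [z *m p^T]mx11_scalar mul_scalar_mx dotE.
Qed.

Lemma dot_self_eq0 (y : V) : dot y y = 0 -> y = 0.
Proof.
move=> h; apply/rowP => i; rewrite mxE.
have h0 : forall j : 'I_d, predT j -> 0 <= y 0 j * y 0 j.
  by move=> j _; rewrite -expr2 sqr_ge0.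
have /eqP := @psumr_eq0P _ _ predT (fun i => y 0 i * y 0 i) h0 h i isT.
by rewrite mulf_eq0 orbb => /eqP.
Qed.

Lemma dotZr (a : R) (x z : V) : dot z (a *: x) = a * dot z x.
Proof. by rewrite dotC dotZl dotC. Qed.
Lemma dotBr (x y z : V) : dot z (x - y) = dot z x - dot z y.
Proof. by rewrite dotC dotBl dotC [dot y z]dotC. Qed.

Lemma bdry_closure (S : set V) x : bdry S x -> closure S x.
Proof. by case. Qed.

Lemma polar_le (S : set V) p x : bdry (polar S) p -> S x -> dot x p <= 1.
Proof.
move=> [hcl _] Sx; rewrite leNgt; apply/negP => hlt.
have hN : nbhs (dot p x) [set r : R | 1 < r].
  apply: open_nbhs_nbhs; split; [exact: open_gt | by rewrite /= dotC].
have := dot_cont x p _ hN => /hcl [q [Pq /= hq]].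
by have := Pq x Sx; rewrite dotC leNgt hq.
Qed.

Lemma bdry_translate (S : set V) z v : bdry S v -> bdry (translate S z) (v - z).
Proof.
move=> [hcl hni].
have FF : Filter (nbhs v) by exact: nbhs_filter.
have htr : (fun y : V => y - z) @ v --> v - z.
  exact: (@cvgB _ _ _ (nbhs v) FF id (fun _ => z) v z cvg_id (cvg_cst z)).
split.
  move=> B hB; have [x [Sx Bx]] := hcl _ (htr _ hB).
  by exists (x - z); split => //; exists x.
move=> hint; apply: hni; have h := htr _ hint.
have sub : (fun y => translate S z (y - z)) `<=` S.
  move=> y [x Sx /(congr1 (fun t => t + z))] /=.
  by rewrite !subrK => <-.
exact: (@filterS _ (nbhs v) FF _ _ sub h).
Qed.

Lemma polar_translate_iff (S : set V) z q : dot q z < 1 ->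
  polar (translate S z) ((1 - dot q z)^-1 *: q) <-> polar S q.
Proof.
move=> hq; have tpos : 0 < 1 - dot q z by rewrite subr_gt0.
have key : forall x, dot (x - z) ((1 - dot q z)^-1 *: q) <= 1 <-> dot x q <= 1.
  move=> x; rewrite dotZr dotBl -(ler_pM2l tpos) mulrA mulfV ?gt_eqF // mul1r mulr1.
  by rewrite [dot z q]dotC lerD2r.
split.
  by move=> h x Sx; apply/key; apply: h; exists x.
by move=> h _ [x Sx <-]; apply/key; apply: h.
Qed.

Lemma bdry_polar_translate (S : set V) z p : dot p z < 1 -> bdry (polar S) p ->
  bdry (polar (translate S z)) ((1 - dot p z)^-1 *: p).
Proof.
move=> hpz [hcl hni].
have hne : 1 - dot p z != 0 by rewrite subr_eq0 eq_sym lt_eqF.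
have FF : Filter (nbhs p) by exact: nbhs_filter.
have hs := (@cvgB R R^o _ (nbhs p) FF (fun _ => 1) (fun q : V => dot q z) 1 (dot p z) (@cvg_cst R^o (1:R) V (nbhs p) FF) (dot_cont z p)).
have hs2 := (@cvgV R _ (nbhs p) FF _ _ hne hs).
have hc := (@cvgZ R V _ (nbhs p) FF _ id _ _ hs2 cvg_id).
have hc' : (fun q : V => (1 - dot q z)^-1 *: q) @ p --> (1 - dot p z)^-1 *: p.
  exact: hc.
have hH : nbhs p [set q : V | dot q z < 1].
  have hN : nbhs (dot p z) [set r : R | r < 1].
    by apply: open_nbhs_nbhs; split; [exact: open_lt | exact: hpz].
  exact: (dot_cont z p _ hN).
split.
  move=> B hB; have h1 := hc B hB.
  have [q [Sq [Bq Hq]]] := hcl _ (@filterI _ (nbhs p) FF _ _ h1 hH).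
  exists ((1 - dot q z)^-1 *: q); split => //.
  by apply/polar_translate_iff.
move=> hint; apply: hni; have h1 := hc _ hint.
have sub : ((fun q : V => (1 - dot q z)^-1 *: q) @^-1` polar (translate S z)) `&` [set q : V | dot q z < 1] `<=` polar S.
  move=> q [h2 h3]; exact: ((@polar_translate_iff S z q h3).1 h2).
exact: (@filterS _ (nbhs p) FF _ _ sub (@filterI _ (nbhs p) FF _ _ h1 hH)).
Qed.
End Helpers.

Section Proj.
Variables (R : realType) (d : nat).
Notation V := 'rV[R]_d.

Lemma BBt_unit (F : 'M[R]_d) : (row_base F *m (row_base F)^T) \in unitmx.
Proof.
rewrite -row_free_unit; apply: inj_row_free => x hx.
set B := row_base F in hx *.
have h0 : dot (x *m B) (x *m B) = 0.
  by rewrite dotE trmx_mul mulmxA -(mulmxA x) hx mul0mx mxE.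
have h1 := @dot_self_eq0 R d _ h0.
apply: (row_free_inj (row_base_free F)).
by rewrite mul0mx.
Qed.

Lemma projmx_sym (F : 'M[R]_d) : (projmx F)^T = projmx F.
Proof.
rewrite /projmx /=; move: (row_base F) => B.
by rewrite !trmx_mul trmxK trmx_inv trmx_mul trmxK !mulmxA.
Qed.

Lemma projmx_idem (F : 'M[R]_d) : projmx F *m projmx F = projmx F.
Proof.
rewrite /projmx /=.
move: (BBt_unit F); move: (row_base F) => B hu.
rewrite !mulmxA -(mulmxA _ B B^T) -(mulmxA _ (B *m B^T) (invmx (B *m B^T))) mulmxV //.
by rewrite mulmx1.
Qed.

Lemma projmx_sub (F : 'M[R]_d) (y : V) : (y <= F)%MS -> y *m projmx F = y.
Proof.
move=> hy; have : (y <= row_base F)%MS by rewrite eq_row_base.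
case/submxP => a ->.
rewrite /projmx /=.
move: (BBt_unit F); move: (row_base F) => B hu.
by rewrite !mulmxA -(mulmxA a B B^T) mulmxK.
Qed.

Lemma convex_comb (S : set V) n (xs : 'I_n -> V) (l : 'I_n -> R) u :
  convexS S -> S u -> (forall i, S (xs i)) -> (forall i, 0 <= l i) ->
  \sum_i l i <= 1 ->
  S (\sum_i l i *: xs i + (1 - \sum_i l i) *: u).
Proof.
move=> hc; elim: n xs l u => [|n IH] xs l u Su Sx l0 hl.
  by rewrite !big_ord0 add0r subr0 scale1r.
move: hl; rewrite !big_ord_recr /=.
set Lam := \sum_(i < n) l (widen_ord (leqnSn n) i).
set a := l ord_max => hl.
have Lam0 : 0 <= Lam by apply: sumr_ge0 => i _; exact: l0.
have a0 : 0 <= a by exact: l0.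
have [Lam1|Lam1] := eqVneq Lam 1.
have a00 : a = 0.
    by apply/eqP; rewrite eq_le a0 andbT; move: hl; rewrite Lam1 -{2}(addr0 1) lerD2l.
  have := IH (fun i => xs (widen_ord (leqnSn n) i)) (fun i => l (widen_ord (leqnSn n) i)) u Su (fun i => Sx _) (fun i => l0 _).
  rewrite -/Lam Lam1 lexx => /(_ isT).
  by rewrite a00 scale0r addr0 addr0 subrr !scale0r !addr0.
have hlt : Lam < 1 by rewrite lt_neqAle Lam1 /=; apply: le_trans hl; rewrite lerDl.
have tpos : 0 < 1 - Lam by rewrite subr_gt0.
set t := a / (1 - Lam).
have t0 : 0 <= t by rewrite divr_ge0 // ltW.
have t1 : t <= 1 by rewrite ler_pdivrMr // mul1r lerBrDl.
have Su' := hc u (xs ord_max) t Su (Sx _) t0 t1.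
have := IH (fun i => xs (widen_ord (leqnSn n) i)) (fun i => l (widen_ord (leqnSn n) i)) _ Su' (fun i => Sx _) (fun i => l0 _) (ltW hlt).
rewrite -/Lam.
have -> : (1 - Lam) *: ((1 - t) *: u + t *: xs ord_max) = a *: xs ord_max + (1 - (Lam + a)) *: u.
  rewrite scalerDr !scalerA addrC; congr (_ *: _ + _ *: _).
    by rewrite /t mulrC -mulrA mulVf ?mulr1 // gt_eqF.
  rewrite /t mulrBr mulr1 [(1 - Lam) * _]mulrC -mulrA mulVf ?mulr1 ?gt_eqF //.
  by rewrite opprD addrA.
by rewrite addrA.
Qed.
End Proj.

Arguments dotC {R d}. Arguments dotE {R d}. Arguments dotZl {R d}. Arguments dotBr {R d}.
Arguments dot_suml {R d n}. Arguments polar_le {R d S p x}. Arguments bdry_translate {R d S z v}.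
Arguments bdry_polar_translate {R d S z p}. Arguments bdry_closure {R d S x}. Arguments dot_row_mul {R d}.
Arguments projmx_idem {R d}. Arguments projmx_sym {R d}. Arguments projmx_sub {R d F y}. Arguments convex_comb {R d S n xs l u}.

Lemma dot0l (R : realType) d (z : 'rV[R]_d) : dot 0 z = 0.
Proof. by rewrite dotE mul0mx mxE. Qed.

Lemma trmxB' (R : realType) m n (x y : 'M[R]_(m, n)) : (x - y)^T = x^T - y^T.
Proof. by apply/matrixP => i j; rewrite !mxE. Qed.

Lemma trmxZ' (R : realType) m n (a : R) (x : 'M[R]_(m, n)) : (a *: x)^T = a *: x^T.
Proof. by apply/matrixP => i j; rewrite !mxE. Qed.

Lemma trmx_sum' (R : realType) m n k (E : 'I_k -> 'M[R]_(m, n)) :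
  (\sum_i E i)^T = \sum_i (E i)^T.
Proof. by apply/matrixP => i j; rewrite !mxE !summxE; apply: eq_bigr => l _; rewrite mxE. Qed.

Theorem mainTheorem11 (R : realType) (d s m : nat) (K L : set 'rV[R]_d)
  (F : 'M[R]_d) (v p : 'I_m -> 'rV[R]_d) (alpha : 'I_m -> R) :
  convex_body K -> convex_body L -> K `<=` L -> interior K 0 ->
  \rank F = s ->
  (forall i, contact_pair K L (v i) (p i)) ->
  (forall i, 0 < alpha i) ->
  projmx F *m (\sum_(i < m) alpha i *: tens (p i) (v i)) *m projmx F = projmx F ->
  \sum_(i < m) alpha i *: p i = 0 ->
  \tr (\sum_(i < m) alpha i *: tens (p i) (v i)) = d%:R ->
  \sum_(i < m) alpha i = d%:R ->
  [set x *m projmx F | x in K] `<=` L `&` subsp F ->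
  exists z : 'rV[R]_d, relint (L `&` subsp F) z /\
  exists (v' p' : 'I_m -> 'rV[R]_d) (c : 'I_m -> R),
    (forall i, contact_pair (translate K z) (translate L z) (v' i) (p' i)) /\
    (forall i, 0 < c i) /\
    \sum_(i < m) c i *: tens (p' i) (v' i) = \sum_(i < m) alpha i *: tens (p i) (v i) /\
    \sum_(i < m) c i *: (v' i *m projmx F) = 0 /\
    \sum_(i < m) c i *: p' i = 0.
Proof.
move=> [cK [cvK _]] _ _ K0 _ hcp alpha0 hPAP hsump _ hsuma hPK.
have PP : projmx F *m projmx F = projmx F := projmx_idem F.
have Psym : (projmx F)^T = projmx F := projmx_sym F.
have Psub : forall y : 'rV[R]_d, (y <= F)%MS -> y *m projmx F = y.
  by move=> y; exact: projmx_sub.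
set P := projmx F in PP Psym Psub hPAP hPK *; clearbody P.
set A := \sum_(i < m) alpha i *: tens (p i) (v i) in hPAP *.
set k : R := d%:R + 1.
have kpos : 0 < k by rewrite /k ltr_wpDl.
have K0' : K 0 := nbhs_singleton K0.
have Kcl : closed K := compact_closed (@norm_hausdorff R _) cK.
have vK : forall i, K (v i).
  by move=> i; rewrite (closure_id K).1 //; exact: bdry_closure (hcp i).1.
set w := \sum_i (alpha i / k) *: v i.
have hlsum : \sum_i alpha i / k = d%:R / k by rewrite -mulr_suml hsuma.
have hl1 : \sum_i alpha i / k <= 1.
  by rewrite hlsum ler_pdivrMr // mul1r /k lerDl.
have hlc : 1 - \sum_i alpha i / k = k^-1.
  by rewrite hlsum -{1}(divff (negbT (gt_eqF kpos))) -mulrBl /k addrAC subrr add0r mul1r.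
have Kcomb : forall u, K u -> K (w + k^-1 *: u).
  move=> u Ku.
  have := convex_comb cvK Ku vK (fun i => divr_ge0 (ltW (alpha0 i)) (ltW kpos)) hl1.
  by rewrite hlc.
have wK : K w by have := Kcomb 0 K0'; rewrite scaler0 addr0.
set z := w *m P.
have zLF : (L `&` subsp F) z by apply: hPK; exists w.
have zP : z *m P = z by rewrite /z -mulmxA PP.
have hzdot : forall i, dot (p i) z < 1.
  move=> i; rewrite dotC /z /w mulmx_suml.
  have -> : \sum_j (alpha j / k *: v j) *m P = \sum_j (alpha j / k) *: (v j *m P).
    by apply: eq_bigr => j _; rewrite scalemxAl.
  rewrite dot_suml; apply: (@le_lt_trans _ _ (\sum_j alpha j / k)).
    apply: ler_sum => j _; rewrite -[X in _ <= X]mulr1; apply: ler_wpM2l.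
      exact: divr_ge0 (ltW (alpha0 j)) (ltW kpos).
    apply: (polar_le (hcp i).2.2.2.1).
    by have [] := hPK (v j *m P) (ex_intro2 _ _ (v j) (vK j) erefl).
  by rewrite hlsum ltr_pdivrMr // mul1r /k ltrDl.
exists z; split.
  split; first exact: zLF.
  have FF : Filter (nbhs z) by exact: nbhs_filter.
  have htr : (fun y : 'rV[R]_d => y - z) @ z --> z - z.
    exact: (@cvgB _ _ _ (nbhs z) FF id (fun _ => z) z z cvg_id (cvg_cst z)).
  have hc := @cvgZl_tmp R _ _ (nbhs z) FF k (fun y : 'rV[R]_d => y - z) (z - z) htr.
  have hn := hc _ (eq_ind_r (fun t => nbhs t K) K0 (etrans (congr1 _ (subrr z)) (scaler0 _ _))).
  have sub : (fun y => k *: (y - z)) @^-1` K `<=` (fun y => aff (L `&` subsp F) y -> (L `&` subsp F) y).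
    move=> y /= hy [n [xs [l [hxs [_ hyeq]]]]].
    have yF : (y <= F)%MS.
      by rewrite hyeq; apply: summx_sub => i _; apply: scalemx_sub; exact: (hxs i).2.
    have := Kcomb _ hy; rewrite scalerA mulVf ?gt_eqF // scale1r => hK.
    have := hPK _ (ex_intro2 _ _ _ hK erefl).
    by rewrite mulmxDl mulmxBl (Psub _ yF) zP addrC subrK.
  exact: (@filterS _ (nbhs z) FF _ _ sub hn).
exists (fun i => v i - z), (fun i => (1 - dot (p i) z)^-1 *: p i),
  (fun i => alpha i * (1 - dot (p i) z)).
have tne : forall i, 1 - dot (p i) z != 0.
  by move=> i; rewrite subr_eq0 eq_sym lt_eqF.
split.
  move=> i; have [h1 [h2 [h3 [h4 h5]]]] := hcp i.
  split; first exact: bdry_translate.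
  split; first exact: bdry_translate.
  split; first exact: bdry_polar_translate.
  split; first exact: bdry_polar_translate.
  by rewrite dotZl dotBr h5 mulVf.
split.
  by move=> i; rewrite mulr_gt0 // subr_gt0.
split.
  transitivity (\sum_i (alpha i *: tens (p i) (v i) - alpha i *: tens (p i) z)).
    apply: eq_bigr => i _.
    rewrite /tens -scalemxAr scalerA -mulrA mulfV // mulr1 trmxB' mulmxBl.
    by rewrite scalerBr.
  rewrite sumrB.
  have -> : \sum_i alpha i *: tens (p i) z = 0.
    rewrite /tens.
    rewrite (eq_bigr (fun i => z^T *m (alpha i *: p i))); last by move=> i _; rewrite scalemxAr.
    by rewrite -mulmx_sumr hsump mulmx0.
  by rewrite subr0.
split; last first.
  rewrite -[RHS]hsump; apply: eq_bigr => i _.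
  by rewrite scalerA -mulrA mulfV // mulr1.
have S1 : \sum_i alpha i *: (v i *m P) = k *: z.
  rewrite /z /w mulmx_suml scaler_sumr; apply: eq_bigr => i _.
  by rewrite -scalemxAl scalerA mulrC -mulrA mulVf ?mulr1 // gt_eqF.
have e2 : P *m A^T *m P = P.
  by have := congr1 trmx hPAP; rewrite !trmx_mul Psym mulmxA.
have S3 : \sum_i (alpha i * dot (p i) z) *: (v i *m P) = z.
  have e1 : \sum_i (alpha i * dot (p i) z) *: (v i *m P) = z *m A^T *m P.
    rewrite /A trmx_sum' mulmx_sumr mulmx_suml; apply: eq_bigr => i _.
    rewrite trmxZ' /tens trmx_mul trmxK -scalemxAr dot_row_mul -scalemxAl.
    by rewrite -scalemxAl scalerA dotC.
  by rewrite e1 /z -!mulmxA (mulmxA P) e2.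
rewrite (eq_bigr (fun i => (alpha i *: (v i *m P) - alpha i *: z) -
   ((alpha i * dot (p i) z) *: (v i *m P) - (alpha i * dot (p i) z) *: z))); last first.
  by move=> i _; rewrite mulmxBl zP mulrBr mulr1 scalerBl !scalerBr.
rewrite !sumrB S1 S3 -!scaler_suml hsuma.
have -> : \sum_i alpha i * dot (p i) z = 0.
  by rewrite -dot_suml hsump dot0l.
rewrite scale0r subr0 -scalerBl.
have -> : k - d%:R = 1 by rewrite /k addrAC subrr add0r.
by rewrite scale1r subrr.
Qed.
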